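(* Let $p$ be an odd prime and $a$ an integer with $1<a<p$. Then there exists a $PComS\!\left(p,\tfrac{p-1}{2},\,2a(a-p)+\tfrac{p(p-1)}{2}\right)$ all of whose members are classes of sequences in $\mathcal{G}_p(a)$.
   Context: $\mathbb{Z}_2^p$ is the set of sequences $X=(x_0,\dots,x_{p-1})$ with entries in $\{+1,-1\}$, indices mod $p$. $\mathcal{G}_p(a)$ is the set of $X\in\mathbb{Z}_2^p$ with exactly $a$ entries equal to $+1$. The periodic autocorrelation is $\mathsf{P}_X(k)=\sum_{i=0}^{p-1}x_ix_{i+k}$; it depends only on the cyclic-shift class $X_C$. A $PComS(n,q,c)$ is a list (repetitions allowed) of $q$ cyclic-shift classes $A_{1C},\dots,A_{qC}$ with $A_i\in\mathbb{Z}_2^n$ such that $\sum_{i=1}^q\mathsf{P}_{A_i}(k)=c$ for all $1\le k\le n-1$. *)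

(* Defs.v *)
From HB Require Import structures.
From mathcomp Require Import all_boot all_order all_algebra.
Set Implicit Arguments. Unset Strict Implicit. Unset Printing Implicit Defensive.
Import Order.TTheory GRing.Theory Num.Theory.
Local Open Scope ring_scope.

(* An element X = (x_0,...,x_{p-1}) of Z_2^p: a sequence of p integers, each +1 or -1.
   Indices are taken mod p. *)
Definition pm1seq (p : nat) (X : seq int) : bool :=
  (size X == p) && all (fun x => (x == 1) || (x == -1)) X.

Definition inG (p a : nat) (X : seq int) : bool :=
  pm1seq p X && (count (pred1 (1 : int)) X == a)%N.

Definition pacf (p : nat) (X : seq int) (k : nat) : int :=
  \sum_(i < p) X`_i * X`_((i + k) %% p).

(* PComS(n,q,c): a list of q elements of Z_2^n (representatives of cyclic-shift
   classes; pacf is shift invariant) with sum_i P_{A_i}(k) = c for 1 <= k <= n-1. *)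
Definition PComS (n q : nat) (c : int) (L : seq (seq int)) : bool :=
  [&& size L == q, all (pm1seq n) L &
      [forall k : 'I_n, (0 < k)%N ==> (\sum_(A <- L) pacf n A k == c)]].

(* Main.v *)
Require Import Defs.
From HB Require Import structures.
From mathcomp Require Import all_boot all_order all_algebra.
From mathcomp Require Import zify ring lra.
Import Order.TTheory GRing.Theory Num.Theory.
Local Open Scope ring_scope.

Lemma big_perm_nat (R : Type) (idx : R) (op : Monoid.com_law idx) (p : nat)
  (g : nat -> nat) (F : nat -> R) :
  (forall i, (i < p)%N -> (g i < p)%N) ->
  (forall i j, (i < p)%N -> (j < p)%N -> g i = g j -> i = j) ->
  \big[op/idx]_(i < p) F (g i) = \big[op/idx]_(i < p) F i.
Proof.
move=> gP gI.
pose h (i : 'I_p) : 'I_p := Ordinal (gP i (ltn_ord i)).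
have hI : injective h.
  by move=> i j /(congr1 val) /= /gI H; apply: val_inj; apply: H.
by rewrite [RHS](reindex_inj hI).
Qed.

Lemma count_sum (T : Type) (P : pred T) (s : seq T) :
  count P s = (\sum_(x <- s) (P x : nat))%N.
Proof. by elim: s => [|x s IH]; rewrite ?big_nil ?big_cons //= IH. Qed.

Local Open Scope nat_scope.
Lemma mul_inj (p u i j : nat) : prime p -> (0 < u < p)%N -> (i < p)%N -> (j < p)%N ->
  (i * u) %% p = (j * u) %% p -> i = j.
Proof.
move=> pp /andP[u0 up].
wlog le_ij : i j / (i <= j)%N.
  move=> H ip jp e; case: (leqP i j) => h; first exact: H.
  by symmetry; apply: H => //; apply: ltnW.
move=> ip jp e.
have : (j * u == i * u %[mod p]) by rewrite e.
rewrite eqn_mod_dvd ?leq_mul2r ?le_ij ?orbT // -mulnBl Euclid_dvdM //.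
rewrite (gtnNdvd u0 up) orbF.
case: (posnP (j - i)) => [|h]; first by lia.
by rewrite gtnNdvd //; lia.
Qed.

Local Open Scope ring_scope.
Definition fv (p a x : nat) : int := if (x %% p < a)%N then 1 else -1.
Definition Xs (p a u : nat) : seq int := mkseq (fun i => fv p a (i * u)) p.
Definition Cc (p a m : nat) : int := \sum_(j < p) fv p a j * fv p a (j + m).

Lemma fv_mod p a x : fv p a (x %% p) = fv p a x.
Proof. by rewrite /fv modn_mod. Qed.

Lemma fv_sq p a x : fv p a x * fv p a x = 1.
Proof. by rewrite /fv; case: ifP. Qed.

Lemma Cc_mod p a m : Cc p a (m %% p) = Cc p a m.
Proof.
apply: eq_bigr => j _; congr (_ * _).
by rewrite -fv_mod modnDmr fv_mod.
Qed.

Lemma Cc_sym p a m n : (0 < p)%N -> ((m + n) %% p = 0)%N -> Cc p a m = Cc p a n.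
Proof.
move=> p0 e.
rewrite /Cc -(@big_perm_nat _ _ _ p (fun j => (j + n) %% p)%N (fun j => fv p a j * fv p a (j + m))); last first.
- move=> i j ip jp /eqP; rewrite eqn_modDr !modn_small //; by move/eqP.
- by move=> i _; rewrite ltn_pmod.
apply: eq_bigr => j _.
rewrite fv_mod -(fv_mod _ _ (_ + m)) modnDml -addnA (addnC n) -modnDmr e addn0.
by rewrite fv_mod mulrC.
Qed.

Lemma pacf_X p a u k : prime p -> (0 < u < p)%N ->
  pacf p (Xs p a u) k = Cc p a (k * u).
Proof.
move=> pp up.
have p0 := prime_gt0 pp.
rewrite /pacf /Xs.
transitivity (\sum_(i < p) (fun j => fv p a j * fv p a (j + k * u)) ((i * u) %% p)%N).
  apply: eq_bigr => i _.
  rewrite !nth_mkseq ?ltn_pmod //.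
  rewrite fv_mod -[in RHS](fv_mod _ _ (_ + _)) modnDml.
  by rewrite -[in LHS](fv_mod _ _ ((i + k) %% p * u)) modnMml mulnDl fv_mod.
rewrite (@big_perm_nat _ _ _ p (fun i => (i * u) %% p)%N (fun j => fv p a j * fv p a (j + k * u))) //.
- by move=> i _; rewrite ltn_pmod.
- by move=> i j ip jp; apply: mul_inj.
Qed.

Lemma sum_fv p a : (0 < p)%N -> (a <= p)%N ->
  \sum_(j < p) fv p a j = a%:Z - (p - a)%:Z.
Proof.
move=> p0 ap.
rewrite -(big_mkord xpredT) (@big_cat_nat _ _ _ a 0 p _ _ (leq0n a) ap) /=.
rewrite (eq_big_nat _ _ (F2 := fun _ => 1)); last first.
  by move=> i /andP[_ ia]; rewrite /fv modn_small ?ia //; lia.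
rewrite [X in _ + X](eq_big_nat _ _ (F2 := fun _ => -1)); last first.
  by move=> i /andP[ai ip]; rewrite /fv modn_small // ltnNge ai.
rewrite !sumr_const_nat subn0 mulNrn. rewrite natz natz. reflexivity.
Qed.

Lemma sum_Cc p a : (0 < p)%N -> \sum_(m < p) Cc p a m = (\sum_(j < p) fv p a j) ^+ 2.
Proof.
move=> p0.
rewrite /Cc exchange_big expr2 mulr_suml /=.
apply: eq_bigr => j _; rewrite -mulr_sumr; congr (_ * _).
rewrite -(@big_perm_nat _ _ _ p (fun m => (m + j) %% p)%N (fv p a)).
- by apply: eq_bigr => m _; rewrite fv_mod addnC.
- by move=> i _; rewrite ltn_pmod.
- move=> i i' ip ip' /eqP; rewrite eqn_modDr !modn_small //; by move/eqP.
Qed.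

Lemma Cc0 p a : Cc p a 0 = p%:Z.
Proof.
rewrite /Cc (eq_bigr (fun _ => 1)); last by move=> j _; rewrite addn0 fv_sq.
by rewrite sumr_const card_ord natz.
Qed.

Lemma half_sum p a k : prime p -> odd p -> (0 < k < p)%N ->
  2 * \sum_(1 <= u < (p.-1./2).+1) Cc p a (k * u) =
  (\sum_(j < p) fv p a j) ^+ 2 - p%:Z.
Proof.
move=> pp op /andP[k0 kp].
have p0 := prime_gt0 pp.
have [q pq] : exists q, p = (q.*2).+1.
  by exists p./2; rewrite -{1}(odd_double_half p) op.
have hq : (p.-1./2 = q)%N by rewrite pq /= doubleK.
set h := p.-1./2.
have ph : p = (h.+1 + h)%N by rewrite /h hq pq -addnn addSn.
set G := fun u => Cc p a (k * u).
have sumall : \sum_(u < p) G u = (\sum_(j < p) fv p a j) ^+ 2.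
  rewrite -sum_Cc // /G.
  rewrite (eq_bigr (fun u : 'I_p => Cc p a ((k * u) %% p))); last by move=> u _; rewrite Cc_mod.
  rewrite (@big_perm_nat _ _ _ p (fun u => (k * u) %% p)%N (Cc p a)) //.
  - by move=> i _; rewrite ltn_pmod.
  - move=> i j ip jp; rewrite ![(k * _)%N]mulnC => e; apply: (@mul_inj p k i j pp _ ip jp e).
    by rewrite k0.
have e1 : \sum_(1 <= u < h.+1) G u = \sum_(0 <= i < h) G (i + 1)%N.
  by have := big_addn 0 h.+1 1 xpredT G; rewrite add0n subn1.
have e2 : \sum_(h.+1 <= u < p) G u = \sum_(0 <= i < h) G (i + 1)%N.
  have := big_addn 0 p h.+1 xpredT G; rewrite add0n => ->.
  have -> : (p - h.+1 = h)%N by rewrite ph addKn.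
  rewrite big_nat_rev /=.
  apply: eq_big_nat => i /andP[_ ih].
  rewrite /G; apply: Cc_sym => //.
  rewrite -mulnDr.
  have -> : (0 + h - i.+1 + h.+1 + (i + 1) = p)%N by rewrite ph; lia.
  by rewrite modnMl.
move: sumall.
rewrite -(big_mkord xpredT) (@big_cat_nat _ _ _ 1 0 p _ _ (leq0n 1)) /=; last by rewrite ph; lia.
rewrite (@big_cat_nat _ _ _ h.+1 1 p _ _ ) //=; last by rewrite ph; lia.
rewrite big_nat1 /G muln0 Cc0 -/G e2 e1 => <-.
by rewrite addrC addrK mulr2n mulrDl mul1r.
Qed.

Theorem theorem10 (p a : nat) :
  prime p -> odd p -> (1 < a < p)%N ->
  exists L : seq (seq int),
    PComS p (p.-1./2) (2 * a%:Z * (a%:Z - p%:Z) + (p * p.-1)./2%:Z) L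
    && all (inG p a) L.
Proof.
move=> pp op /andP[a1 ap].
have p0 := prime_gt0 pp.
exists (map (Xs p a) (iota 1 (p.-1./2))).
have pm : forall u, pm1seq p (Xs p a u).
  move=> u; rewrite /pm1seq size_mkseq eqxx /=.
  by apply/allP => x /mapP [i _ ->]; rewrite /fv; case: ifP.
have up : forall u, u \in iota 1 (p.-1./2) -> (0 < u < p)%N.
  move=> u; rewrite mem_iota => /andP[u1 uh].
  have : (p.-1./2 < p)%N by rewrite -divn2; apply: leq_ltn_trans (leq_div _ _) _; lia.
  lia.
apply/andP; split; last first.
  rewrite all_map; apply/allP => u /up uP /=.
  rewrite /inG pm /= /Xs /mkseq count_map count_sum.
  have -> : iota 0 p = index_iota 0 p by rewrite /index_iota subn0.
  rewrite big_mkord.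
  rewrite (eq_bigr (fun i : 'I_p => (fun j => ((j < a)%N : nat)) ((i * u) %% p)%N)); last first.
    by move=> i _; rewrite /= /fv; case: ifP.
  rewrite (@big_perm_nat _ _ _ p (fun i => (i * u) %% p)%N (fun j => ((j < a)%N : nat))); last first.
  - by move=> i j ip jp; apply: mul_inj.
  - by move=> i _; rewrite ltn_pmod.
  rewrite -(big_mkord (fun _ => true) (fun j => ((j < a)%N : nat))) (@big_cat_nat _ _ _ a 0 p _ _ (leq0n a)) /=; last exact: ltnW.
  rewrite (eq_big_nat _ _ (F2 := fun _ => 1%N)); last by move=> i /andP[_ ->].
  rewrite [X in (_ + X)%N](eq_big_nat _ _ (F2 := fun _ => 0%N)); last first.
    by move=> i /andP[ai _]; rewrite ltnNge ai.
  by rewrite !sum_nat_const_nat subn0 muln1 muln0 addn0.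
rewrite /PComS size_map size_iota eqxx /= all_map.
apply/andP; split.
  by apply/allP => u _ /=; apply: pm.
apply/forallP => k; apply/implyP => k0.
rewrite big_map (eq_big_seq (fun u => Cc p a (k * u))); last first.
  by move=> u /up uP; rewrite pacf_X.
have -> : \sum_(u <- iota 1 p.-1./2) Cc p a (k * u) = \sum_(1 <= u < (p.-1./2).+1) Cc p a (k * u).
  by rewrite /index_iota subn1.
apply/eqP; apply: (@mulfI _ 2) => //.
rewrite half_sum // ?k0 ?ltn_ord // sum_fv //; last by apply: ltnW.
have [q pq] : exists q, p = (q.*2).+1.
  by exists p./2; rewrite -{1}(odd_double_half p) op.
have -> : ((p * p.-1)./2 = p * q)%N by rewrite {2}pq /= -doubleMr doubleK.
rewrite -subzn; last by apply: ltnW.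
rewrite PoszM pq.
nia.
Qed.
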